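(* Let $E:\mathbb{R}^{N_x}\to\mathbb{R}$ be twice differentiable, and consider the optimal control problem (R): minimize $y(t_f)$ over state trajectories $(y(\cdot),\boldsymbol x(\cdot),\boldsymbol v(\cdot))$ with $y(t)\in\mathbb{R}$, $\boldsymbol x(t),\boldsymbol v(t)\in\mathbb{R}^{N_x}$, unconstrained controls $\boldsymbol u(t)\in\mathbb{R}^{N_x}$ and free final time $t_f$, subject to $\dot{\boldsymbol x}=\boldsymbol v$, $\dot{\boldsymbol v}=\boldsymbol u$, $\dot y=\nabla E(\boldsymbol x)\cdot\boldsymbol v$, $(\boldsymbol x(t_0),t_0)=(\boldsymbol x^0,t^0)$, $y(t_0)=E(\boldsymbol x^0)$, $\boldsymbol v(t_f)=\mathbf 0$, where $\boldsymbol x^0\in\mathbb{R}^{N_x}$ and $t^0$ are given, and $t_f$, $\boldsymbol x(t_f)$, $\boldsymbol v(t_0)$ are free. Then Problem (R) has no abnormal extremals; that is, for every extremal the cost multiplier $\nu_0$ is strictly positive.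
   Context: The Pontryagin Hamiltonian of (R) is $H(\boldsymbol\lambda_x,\boldsymbol\lambda_v,\lambda_y,\boldsymbol x,\boldsymbol v,y,\boldsymbol u)=\boldsymbol\lambda_x\cdot\boldsymbol v+\boldsymbol\lambda_v\cdot\boldsymbol u+\lambda_y\,\nabla E(\boldsymbol x)\cdot\boldsymbol v$. An extremal is a state–control trajectory together with costates $(\boldsymbol\lambda_x,\boldsymbol\lambda_v,\lambda_y)$ and a cost multiplier $\nu_0\ge 0$, not all multipliers vanishing (nontriviality), satisfying the adjoint equations $\dot{\boldsymbol\lambda}_x=-\lambda_y\nabla^2E(\boldsymbol x)\boldsymbol v$, $\dot{\boldsymbol\lambda}_v=-\boldsymbol\lambda_x-\lambda_y\nabla E(\boldsymbol x)$, $\dot\lambda_y=0$; the transversality conditions $\boldsymbol\lambda_x(t_f)=\mathbf 0$, $\boldsymbol\lambda_v(t_0)=\mathbf 0$, $\lambda_y(t_f)=\nu_0$; and the Hamiltonian minimization condition ($\boldsymbol u(t)$ minimizes $H$ over $\mathbb{R}^{N_x}$). An extremal is abnormal if $\nu_0=0$. *)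

(* Defs.v *)
From HB Require Import structures.
From mathcomp Require Import all_boot all_order all_algebra.
From mathcomp Require Import all_classical all_reals all_analysis.
Set Implicit Arguments. Unset Strict Implicit. Unset Printing Implicit Defensive.
Import Order.TTheory GRing.Theory Num.Theory.
Import numFieldNormedType.Exports.
Local Open Scope classical_set_scope.
Local Open Scope ring_scope.

Definition dotv (R : realType) (n : nat) (a b : 'rV[R]_n) : R :=
  \sum_(i < n) a 0 i * b 0 i.

Definition grad (R : realType) (n : nat) (E : 'rV[R]_n -> R) (x : 'rV[R]_n)
  : 'rV[R]_n := \row_i 'D_(delta_mx 0 i) E x.

Definition hessv (R : realType) (n : nat) (E : 'rV[R]_n -> R)
  (x w : 'rV[R]_n) : 'rV[R]_n := 'D_w (grad E) x.

Definition twice_differentiable (R : realType) (n : nat) (E : 'rV[R]_n -> R) :=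
  forall x, differentiable E x /\ differentiable (grad E) x.

Definition hamiltonian (R : realType) (n : nat) (E : 'rV[R]_n -> R)
  (lx lv : 'rV[R]_n) (ly : R) (x v : 'rV[R]_n) (y : R) (u : 'rV[R]_n) : R :=
  dotv lx v + dotv lv u + ly * dotv (grad E x) v.

Definition admissible (R : realType) (n : nat) (E : 'rV[R]_n -> R)
  (x0 : 'rV[R]_n) (t0 tf : R)
  (x v : R -> 'rV[R]_n) (y : R -> R) (u : R -> 'rV[R]_n) : Prop :=
  [/\ t0 < tf,
      [/\ {within `[t0, tf], continuous x}, {within `[t0, tf], continuous v}
        & {within `[t0, tf], continuous y}],
      (forall t, t0 < t < tf ->
        [/\ is_derive t 1 x (v t), is_derive t 1 v (u t)
          & is_derive t 1 y (dotv (grad E (x t)) (v t))])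
    & [/\ x t0 = x0, y t0 = E x0 & v tf = 0]].

Definition extremal (R : realType) (n : nat) (E : 'rV[R]_n -> R)
  (x0 : 'rV[R]_n) (t0 tf : R)
  (x v : R -> 'rV[R]_n) (y : R -> R) (u : R -> 'rV[R]_n)
  (lx lv : R -> 'rV[R]_n) (ly : R -> R) (nu0 : R) : Prop :=
  admissible E x0 t0 tf x v y u /\ 0 <= nu0 /\
  [/\
      ~ (nu0 = 0 /\ forall t, t0 <= t <= tf ->
           [/\ lx t = 0, lv t = 0 & ly t = 0]),
      [/\ {within `[t0, tf], continuous lx}, {within `[t0, tf], continuous lv}
        & {within `[t0, tf], continuous ly}],
      (forall t, t0 < t < tf ->
        [/\ is_derive t 1 lx (- (ly t *: hessv E (x t) (v t))),
            is_derive t 1 lv (- lx t - ly t *: grad E (x t))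
          & is_derive t 1 ly 0]),
      [/\ lx tf = 0, lv t0 = 0 & ly tf = nu0]
    &
      (forall t, t0 <= t <= tf -> forall w : 'rV[R]_n,
        hamiltonian E (lx t) (lv t) (ly t) (x t) (v t) (y t) (u t)
        <= hamiltonian E (lx t) (lv t) (ly t) (x t) (v t) (y t) w)].

(* Main.v *)
Require Import Defs.
From HB Require Import structures.
From mathcomp Require Import all_boot all_order all_algebra.
From mathcomp Require Import all_classical all_reals all_analysis.
Import Order.TTheory GRing.Theory Num.Theory.
Import numFieldNormedType.Exports.
Local Open Scope ring_scope.

Section helpers.
Local Open Scope classical_set_scope.

Lemma cst_scal (R : realType) (g : R -> R) (a b : R) :
  {within `[a, b], continuous g} ->
  (forall t, a < t < b -> is_derive t 1 g 0) ->
  forall t s, a <= t <= b -> a <= s <= b -> g t = g s.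
Proof.
move=> gc gd.
suff H : forall t s, a <= t -> t <= s -> s <= b -> g t = g s.
  move=> t s /andP[hat tb] /andP[has sb].
  have [ts|st] := leP t s; first exact: H.
  by symmetry; apply: H => //; apply: ltW.
move=> t s hat ts sb.
have sub : `[t, s] `<=` `[a, b].
  by apply: subset_itv; rewrite bnd_simp.
have [c _ hc] := @MVT_segment R g (fun _ => 0) t s ts
  (fun x xin => gd x ltac:(move: xin; rewrite in_itv /= => /andP[h1 h2];
     apply/andP; split; [exact: le_lt_trans hat h1|exact: lt_le_trans h2 sb]))
  (continuous_subspaceW sub gc).
by apply/eqP; rewrite eq_sym -subr_eq0 hc mul0r.
Qed.

Lemma cst_vec (R : realType) n (f : R -> 'rV[R]_n) (a b : R) :
  {within `[a, b], continuous f} ->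
  (forall t, a < t < b -> is_derive t 1 f 0) ->
  forall t s, a <= t <= b -> a <= s <= b -> f t = f s.
Proof.
move=> fc fd t s ht hs; apply/matrixP => j i.
have hc : {within `[a, b], continuous (fun t => f t j i)}.
  move=> x.
  exact: (@continuous_comp (subspace `[a, b]) _ _ f (fun M : 'rV[R]_n => M j i) x (fc x) (@coord_continuous R 1 n j i (f x))).
apply: (@cst_scal R (fun t => f t j i) a b hc _ t s ht hs).
move=> x hx.
have fdx := fd x hx.
have dv : derivable f x 1 by case: fdx.
have dc : derivable (fun t => f t j i) x 1 by move/derivable_mxP: dv; apply.
have := derive_mx dv; rewrite derive_val => /matrixP /(_ j i).
rewrite !mxE => h.
have := derivableP dc; by rewrite -h.
Qed.

End helpers.

Theorem lemma1 (R : realType) (n : nat) (E : 'rV[R]_n -> R)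
  (hE : twice_differentiable E) (x0 : 'rV[R]_n) (t0 tf : R)
  (x v : R -> 'rV[R]_n) (y : R -> R) (u : R -> 'rV[R]_n)
  (lx lv : R -> 'rV[R]_n) (ly : R -> R) (nu0 : R) :
  extremal E x0 t0 tf x v y u lx lv ly nu0 -> 0 < nu0.
Proof.
move=> [[t0tf _ _ _] [nu0ge [nontriv [clx clv cly] adj [lxf lv0 lyf] _]]].
rewrite lt_def nu0ge andbT; apply/eqP => nu00.
apply: nontriv; split => //.
have hin : forall t, t0 < t < tf -> t0 <= t <= tf.
  by move=> t /andP[h1 h2]; rewrite !ltW.
have ef : t0 <= tf <= tf by rewrite lexx ltW.
have e0 : t0 <= t0 <= tf by rewrite lexx ltW.
have ly0 : forall t, t0 <= t <= tf -> ly t = 0.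
  move=> t ht; rewrite -nu00 -lyf.
  apply: (@cst_scal _ _ _ _ cly _ _ _ ht ef) => s hs.
  by case: (adj s hs).
have lx0 : forall t, t0 <= t <= tf -> lx t = 0.
  move=> t ht; rewrite -lxf.
  apply: (@cst_vec _ _ _ _ _ clx _ _ _ ht ef) => s hs.
  case: (adj s hs) => h _ _; move: h; by rewrite ly0 ?hin // scale0r oppr0.
have lv00 : forall t, t0 <= t <= tf -> lv t = 0.
  move=> t ht; rewrite -lv0.
  apply: (@cst_vec _ _ _ _ _ clv _ _ _ ht e0) => s hs.
  case: (adj s hs) => _ h _; move: h.
  rewrite ly0 ?hin // lx0 ?hin // scale0r; move=> h; have e : (- 0 - 0 : 'rV[R]_n) = 0 by rewrite oppr0 addr0.
  by rewrite e in h.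
by move=> t ht; split; [exact: lx0|exact: lv00|exact: ly0].
Qed.
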